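(* Assume Assumption A. Let $\mathbb B^s=\{(\eta,\xi):\eta\ne\xi,\ (\eta,\xi)\in\mathbb B\text{ or }(\xi,\eta)\in\mathbb B\}$ and $c^s_N(\eta,\xi)=\tfrac12\{\mu_N(\eta)R_N(\eta,\xi)+\mu_N(\xi)R_N(\xi,\eta)\}$. Then the family of sequences $(c^s_N(\eta,\xi))_{N\ge1}$, $(\eta,\xi)\in\mathbb B^s$, is ordered.
   Context: Setting: $E$ is a fixed finite set; for each $N\ge1$, $(\eta^N_t)$ is a continuous-time irreducible Markov chain on $E$ with jump rates $R_N(\eta,\xi)$ and unique invariant probability measure $\mu_N$. Ordered families: a finite family of sequences of positive reals $(a^r_N)_{N\ge1}$, $r\in\mathfrak R$, is ordered if for all $r\neq s$ the sequence $\arctan(a^r_N/a^s_N)$ converges as $N\to\infty$. Assumption A: (i) for each $\eta\neq\xi$, either $R_N(\eta,\xi)=0$ for all $N$ or $R_N(\eta,\xi)>0$ for all $N$; let $\mathbb B=\{(\eta,\xi):\eta\ne\xi,R_N(\eta,\xi)>0\}$. (ii) For every $m\ge1$ the family $\prod_{(\eta,\xi)\in\mathbb B}R_N(\eta,\xi)^{k(\eta,\xi)}$, indexed by $k:\mathbb B\to\mathbb Z_+$ with $\sum k=m$, is ordered. *)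

(* Defs.v *)
From mathcomp Require Import all_boot.
From Stdlib Require Import Reals Relations.
Set Implicit Arguments. Unset Strict Implicit. Unset Printing Implicit Defensive.
Local Open Scope R_scope.

(* Sequences (a_N)_{N>=1} are represented as functions nat -> R,
   with index n standing for N = n+1. *)

Definition ordered_family (I : Type) (P : I -> Prop) (a : I -> nat -> R) : Prop :=
  (forall r, P r -> forall N, 0 < a r N) /\
  (forall r s, P r -> P s -> r <> s ->
     exists l, Un_cv (fun N => atan (a r N / a s N)) l).

Definition irreducible (E : finType) (Rt : E -> E -> R) : Prop :=
  forall x y : E, clos_refl_trans E (fun a b => a <> b /\ 0 < Rt a b) x y.

Definition rates (E : finType) (Rt : E -> E -> R) : Prop :=
  forall x y : E, x <> y -> 0 <= Rt x y.

Definition invariant_prob (E : finType) (Rt : E -> E -> R) (mu : E -> R) : Prop :=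
  (forall x, 0 <= mu x) /\
  \big[Rplus/0]_(x : E) mu x = 1 /\
  (forall y : E,
     \big[Rplus/0]_(x : E | x != y) (mu x * Rt x y)
     = mu y * \big[Rplus/0]_(z : E | z != y) Rt y z).

Definition bond (E : finType) (Rt : nat -> E -> E -> R) (x y : E) : Prop :=
  x <> y /\ forall N, 0 < Rt N x y.

Definition assumptionA1 (E : finType) (Rt : nat -> E -> E -> R) : Prop :=
  forall x y : E, x <> y ->
    (forall N, Rt N x y = 0) \/ (forall N, 0 < Rt N x y).

(* Exponent vectors k : B -> Z_+ with sum m (k extended by 0 outside B). *)
Definition exponent (E : finType) (Rt : nat -> E -> E -> R) (m : nat)
  (k : E -> E -> nat) : Prop :=
  (forall x y, k x y <> 0%nat -> bond Rt x y) /\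
  (\sum_(p : E * E | p.1 != p.2) k p.1 p.2)%N = m.

Definition monomial (E : finType) (Rt : nat -> E -> E -> R)
  (k : E -> E -> nat) (N : nat) : R :=
  \big[Rmult/1]_(p : E * E | p.1 != p.2) (Rt N p.1 p.2 ^ k p.1 p.2).

Definition assumptionA2 (E : finType) (Rt : nat -> E -> E -> R) : Prop :=
  forall m : nat, (1 <= m)%nat ->
    ordered_family (exponent Rt m) (monomial Rt).

Definition sym_bond (E : finType) (Rt : nat -> E -> E -> R) (p : E * E) : Prop :=
  p.1 <> p.2 /\ (bond Rt p.1 p.2 \/ bond Rt p.2 p.1).

Definition cs (E : finType) (Rt : nat -> E -> E -> R) (mu : nat -> E -> R)
  (p : E * E) (N : nat) : R :=
  / 2 * (mu N p.1 * Rt N p.1 p.2 + mu N p.2 * Rt N p.2 p.1).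

(* Main.v *)
Require Import Defs.
From HB Require Import structures.
From mathcomp Require Import all_boot.
From Stdlib Require Import Reals Relations Lra Lia Classical FunctionalExtensionality.
From mathcomp Require Import zify.
From Stdlib Require List.
Local Open Scope R_scope.
HB.instance Definition _ := Monoid.isComLaw.Build R 0%R Rplus (fun a b c => esym (Rplus_assoc a b c)) Rplus_comm Rplus_0_l.
HB.instance Definition _ := Monoid.isComLaw.Build R 1%R Rmult (fun a b c => esym (Rmult_assoc a b c)) Rmult_comm Rmult_1_l.
HB.instance Definition _ := Monoid.isMulLaw.Build R 0%R Rmult Rmult_0_l Rmult_0_r.
HB.instance Definition _ := Monoid.isAddLaw.Build R Rmult Rplus Rmult_plus_distr_r Rmult_plus_distr_l.

Definition kadd {E : finType} (k1 k2 : E -> E -> nat) := fun x y => (k1 x y + k2 x y)%nat.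

Lemma mono_pos (E : finType) (Rt : nat -> E -> E -> R) m k N :
  exponent Rt m k -> 0 < monomial Rt k N.
Proof.
move=> [Hb _]. rewrite /monomial. apply: (big_ind (fun x => 0 < x)).
- lra.
- move=> x y; exact: Rmult_lt_0_compat.
- move=> [x y] _ /=. case: (eqVneq (k x y) 0%nat) => [->|Hk].
  + rewrite pow_O; lra.
  + apply: pow_lt. move/eqP: Hk => Hk. have [_ HB] := Hb x y Hk. exact: HB.
Qed.

Arguments mono_pos {E Rt m k} N _.
Lemma mono_add (E : finType) (Rt : nat -> E -> E -> R) k1 k2 N :
  monomial Rt (kadd k1 k2) N = monomial Rt k1 N * monomial Rt k2 N.
Proof.
rewrite /monomial -big_split. apply: eq_bigr => p _. by rewrite /kadd pow_add.
Qed.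

Lemma exponent_add (E : finType) (Rt : nat -> E -> E -> R) m1 m2 k1 k2 :
  exponent Rt m1 k1 -> exponent Rt m2 k2 -> exponent Rt (m1 + m2) (kadd k1 k2).
Proof.
move=> [H1 S1] [H2 S2]; split.
- move=> x y; rewrite /kadd. case: (eqVneq (k1 x y) 0%nat) => [E1|E1]; last by move=> _; apply: H1; apply/eqP.
  rewrite E1 add0n. exact: H2.
- by rewrite /kadd big_split /= S1 S2.
Qed.

Definition zk (E : finType) : E -> E -> nat := fun _ _ => 0%nat.

Lemma exponent_zk (E : finType) (Rt : nat -> E -> E -> R) : exponent Rt 0 (@zk E).
Proof. split; first by move=> x y; rewrite /zk. by rewrite big1. Qed.

Lemma mono_zk (E : finType) (Rt : nat -> E -> E -> R) N : monomial Rt (@zk E) N = 1.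
Proof. rewrite /monomial big1 //. Qed.

Definition lsum {E : finType} (Rt : nat -> E -> E -> R) (l : seq (R * (E -> E -> nat))) N :=
  foldr (fun p acc => p.1 * monomial Rt p.2 N + acc) 0 l.

Definition plist {E : finType} (Rt : nat -> E -> E -> R) m (l : seq (R * (E -> E -> nat))) :=
  forall p, List.In p l -> 0 < p.1 /\ exponent Rt m p.2.

Definition lmul {E : finType} (l1 l2 : seq (R * (E -> E -> nat))) :=
  flatten [seq [seq (p.1 * q.1, kadd p.2 q.2) | q <- l2] | p <- l1].

Lemma lsum_app (E : finType) (Rt : nat -> E -> E -> R) l1 l2 N :
  lsum Rt (l1 ++ l2) N = lsum Rt l1 N + lsum Rt l2 N.
Proof. elim: l1 => [|p l IH] /=; first by rewrite /lsum /=; lra.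
rewrite /lsum /= in IH *. rewrite IH; lra. Qed.

Lemma lsum_mul (E : finType) (Rt : nat -> E -> E -> R) l1 l2 N :
  lsum Rt (lmul l1 l2) N = lsum Rt l1 N * lsum Rt l2 N.
Proof.
elim: l1 => [|p l IH]; first by rewrite /lsum /=; lra.
rewrite /lmul /= lsum_app -/(lmul l l2) IH /=.
have -> : lsum Rt [seq (p.1 * q.1, kadd p.2 q.2) | q <- l2] N = p.1 * monomial Rt p.2 N * lsum Rt l2 N.
  clear IH. elim: l2 => [|q l2 IH2] /=; first by rewrite /lsum /=; lra.
  rewrite /lsum /= in IH2 *. rewrite IH2 mono_add. ring.
rewrite /lsum /=. ring.
Qed.

Lemma plist_app (E : finType) (Rt : nat -> E -> E -> R) m l1 l2 :
  plist Rt m l1 -> plist Rt m l2 -> plist Rt m (l1 ++ l2).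
Proof. move=> H1 H2 p /List.in_app_iff [H|H]; [exact: H1|exact: H2]. Qed.

Lemma plist_mul (E : finType) (Rt : nat -> E -> E -> R) m1 m2 l1 l2 :
  plist Rt m1 l1 -> plist Rt m2 l2 -> plist Rt (m1 + m2) (lmul l1 l2).
Proof.
elim: l1 => [|p l IH] H1 H2 /=; first by move=> q [].
rewrite /lmul /=. apply: plist_app; last first.
  apply: IH => //. move=> q Hq; apply: H1; right; exact: Hq.
move=> q /List.in_map_iff [r [<- Hr]] /=.
have [Hp1 Hp2] := H1 p (or_introl erefl). have [Hr1 Hr2] := H2 r Hr.
split; [exact: Rmult_lt_0_compat|exact: exponent_add].
Qed.

Arguments plist_app {E Rt m l1 l2}.
Arguments plist_mul {E Rt m1 m2 l1 l2}.
Lemma lsum_ge0 (E : finType) (Rt : nat -> E -> E -> R) m l N :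
  plist Rt m l -> 0 <= lsum Rt l N.
Proof.
elim: l => [|p l IH] H; rewrite /lsum /=; first lra.
have [H1 H2] := H p (or_introl erefl).
have := mono_pos N H2. have : 0 <= lsum Rt l N by apply: IH => q Hq; apply: H; right; exact: Hq.
rewrite /lsum. nra.
Qed.

Lemma lsum_pos (E : finType) (Rt : nat -> E -> E -> R) m p l N :
  plist Rt m (p :: l) -> 0 < lsum Rt (p :: l) N.
Proof.
move=> H. have [H1 H2] := H p (or_introl erefl).
have := mono_pos N H2. have : 0 <= lsum Rt l N by apply: (@lsum_ge0 _ _ m) => q Hq; apply: H; right; exact: Hq.
rewrite /lsum /=. nra.
Qed.
Lemma cv_inv u l : Un_cv u l -> l <> 0 -> Un_cv (fun N => / u N) (/ l).
Proof. intros H Hl.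
have := continuity_seq (fun x => / x) u l. apply. 2: exact H.
apply: (continuity_pt_inv (fun x => x)). apply: derivable_continuous_pt.
apply: derivable_pt_id. exact Hl. Qed.

Arguments cv_inv {u l}.
Lemma cv_const c : Un_cv (fun _ => c) c.
Proof. intros e He. exists 0%nat. intros. rewrite /Rdist Rminus_diag Rabs_R0. lra. Qed.

Lemma cv_ext {u v l} : (forall N, u N = v N) -> Un_cv u l -> Un_cv v l.
Proof. intros H. have -> : v = u by apply functional_extensionality; intros; rewrite H. done. Qed.

Lemma cv_ge0 u l : (forall N, 0 <= u N) -> Un_cv u l -> 0 <= l.
Proof. intros H Hc. apply: (Rle_cv_lim (Un := fun _ => 0) _ (cv_const 0) Hc). exact H. Qed.

Lemma cv_le u l c : (forall N, u N <= c) -> Un_cv u l -> l <= c.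
Proof. intros H Hc. apply: (Rle_cv_lim _ Hc (cv_const c)). exact H. Qed.

Lemma cv_atan u l : Un_cv u l -> Un_cv (fun N => atan (u N)) (atan l).
Proof. intros H. apply: continuity_seq H. apply: derivable_continuous_pt. apply derivable_pt_atan. Qed.

Arguments cv_atan {u l}.
Lemma cv_tan u l : -PI/2 < l < PI/2 -> Un_cv u l -> Un_cv (fun N => tan (u N)) (tan l).
Proof. intros Hl H. apply: continuity_seq H. apply: derivable_continuous_pt. apply derivable_pt_tan. lra. Qed.

Definition cmpf (a b : nat -> R) := exists L, Un_cv (fun N => a N / b N) L.

Lemma atan_cmp a b l : (forall N, 0 < a N) -> (forall N, 0 < b N) ->
  Un_cv (fun N => atan (a N / b N)) l -> cmpf a b \/ cmpf b a.
Proof.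
intros Ha Hb H.
have Hpos : forall N, 0 < a N / b N by intros N; apply Rdiv_lt_0_compat.
have Hl1 : l <= PI/2.
  apply: (cv_le _ _ _ _ H) => N. have := atan_bound (a N / b N). lra.
have Hl0 : 0 <= l.
  apply: (cv_ge0 _ _ _ H) => N. have := atan_increasing 0 (a N / b N) (Hpos N).
  rewrite atan_0. lra.
have Hpi := PI_RGT_0.
destruct (Rle_lt_or_eq_dec _ _ Hl1) as [Hlt|Heq].
- left. exists (tan l). apply: cv_ext (cv_tan _ _ _ H); [|lra].
  intros N. by rewrite tan_atan.
- right. exists (tan 0).
  have H2 : Un_cv (fun N => atan (b N / a N)) 0.
    replace 0 with (PI/2 - l) by lra.
    apply: cv_ext (CV_minus _ _ _ _ (cv_const (PI/2)) H); last first.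
    intros N. have -> : b N / a N = / (a N / b N).
      field. split; apply: Rgt_not_eq; first [apply Ha|apply Hb].
    rewrite atan_inv; [reflexivity|apply Hpos].
  apply: cv_ext (cv_tan _ _ _ H2); [|lra].
  intros N. by rewrite tan_atan.
Qed.

Ltac mp := apply: mono_pos; eassumption.

Lemma cmp_refl a : (forall N, 0 < a N) -> cmpf a a.
Proof. move=> H. exists 1. apply: cv_ext (cv_const 1) => N. field. apply: Rgt_not_eq. exact: H. Qed.

Lemma cmp_trans a b c : (forall N, 0 < b N) -> (forall N, 0 < c N) -> cmpf a b -> cmpf b c -> cmpf a c.
Proof.
move=> Hb Hc [L1 H1] [L2 H2]. exists (L1 * L2). apply: cv_ext (CV_mult _ _ _ _ H1 H2) => N.
field. split; apply: Rgt_not_eq; [exact: Hc|exact: Hb].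
Qed.

Lemma pair_cmp (E : finType) (Rt : nat -> E -> E -> R) (HA2 : assumptionA2 Rt) m k k' :
  (1 <= m)%nat -> exponent Rt m k -> exponent Rt m k' ->
  cmpf (fun N => monomial Rt k N) (fun N => monomial Rt k' N) \/
  cmpf (fun N => monomial Rt k' N) (fun N => monomial Rt k N).
Proof.
move=> Hm Hk Hk'. case: (classic (k = k')) => [<-|Hne].
  left. apply: cmp_refl => N. mp.
have [_ Ho] := HA2 m Hm. have [l Hl] := Ho k k' Hk Hk' Hne.
apply: atan_cmp Hl => N; mp.
Qed.

Arguments pair_cmp {E Rt} HA2 {m k k'}.
Lemma dom (E : finType) (Rt : nat -> E -> E -> R) (HA2 : assumptionA2 Rt) m (Hm : (1 <= m)%nat) :
  forall K : seq (E -> E -> nat), K <> [::] -> (forall k, List.In k K -> exponent Rt m k) ->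
  exists d, List.In d K /\ forall k, List.In k K ->
    cmpf (fun N => monomial Rt k N) (fun N => monomial Rt d N).
Proof.
elim => [//|k K IH] _ HK.
have Hk : exponent Rt m k by apply: HK; left.
case: (eqVneq (size K) 0%nat) => [/size0nil HK0|HK0].
  subst K. exists k; split; first by left.
  move=> k0 /= [<-|[]]. apply: cmp_refl => N; mp.
have HKn : K <> [::] by move=> HH; rewrite HH in HK0.
have [d' [Hd' Hdom]] := IH HKn (fun k0 Hk0 => HK k0 (or_intror Hk0)).
have Hd'e : exponent Rt m d' by apply: HK; right.
case: (pair_cmp HA2 Hm Hk Hd'e) => Hc.
- exists d'; split; first by right.
  move=> k0 [<-|Hk0]; [exact: Hc|exact: Hdom].
- exists k; split; first by left.
  move=> k0 [<-|Hk0]; first by apply: cmp_refl => N; mp.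
  apply: (@cmp_trans _ (fun N => monomial Rt d' N)) => //; try (move=> N; mp).
  exact: Hdom.
Qed.

Arguments dom {E Rt} HA2 {m} Hm {K}.
Lemma plim (E : finType) (Rt : nat -> E -> E -> R) m d l :
  exponent Rt m d -> plist Rt m l ->
  (forall p, List.In p l -> cmpf (fun N => monomial Rt p.2 N) (fun N => monomial Rt d N)) ->
  exists L, Un_cv (fun N => lsum Rt l N / monomial Rt d N) L /\ 0 <= L /\
    (List.In d (map snd l) -> 0 < L).
Proof.
move=> Hd. elim: l => [|p l IH] Hl Hc.
  exists 0; split; last by split; [lra|case].
  apply: cv_ext (cv_const 0) => N. rewrite /lsum /=. field. apply: Rgt_not_eq; mp.
have [Hp1 Hp2] := Hl p (or_introl erefl).
have [L [HL [HL0 HLp]]] := IH (fun q Hq => Hl q (or_intror Hq)) (fun q Hq => Hc q (or_intror Hq)).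
have [Lp HLp'] := Hc p (or_introl erefl).
have HLp0 : 0 <= Lp.
  apply: cv_ge0 HLp' => N. apply: Rlt_le; apply: Rdiv_lt_0_compat; mp.
exists (p.1 * Lp + L); split; last split.
- apply: cv_ext (CV_plus _ _ _ _ (CV_mult _ _ _ _ (cv_const p.1) HLp') HL) => N.
  rewrite /lsum /=. field. apply: Rgt_not_eq; mp.
- nra.
- move=> /= [Hpd|Hin].
  + have -> : Lp = 1.
      apply: (UL_sequence _ _ _ HLp'). apply: cv_ext (cv_const 1) => N. rewrite Hpd.
      field. apply: Rgt_not_eq; mp.
    nra.
  + have := HLp Hin. nra.
Qed.

Arguments plim {E Rt m d l}.
Lemma poly_ratio (E : finType) (Rt : nat -> E -> E -> R) (HA2 : assumptionA2 Rt) m l1 l2 :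
  (1 <= m)%nat -> plist Rt m l1 -> plist Rt m l2 ->
  (forall N, 0 < lsum Rt l1 N) -> (forall N, 0 < lsum Rt l2 N) ->
  exists l, Un_cv (fun N => atan (lsum Rt l1 N / lsum Rt l2 N)) l.
Proof.
move=> Hm H1 H2 P1 P2.
have H12 := plist_app H1 H2.
have Hne : map snd (l1 ++ l2) <> [::].
  case: l1 H1 P1 H12 => [|p l1] /= H1 P1 H12 //. have := P1 0%nat. rewrite /lsum /=. lra.
have HKe : forall k, List.In k (map snd (l1 ++ l2)) -> exponent Rt m k.
  move=> k /List.in_map_iff [p [<- Hp]]. by have [] := H12 p Hp.
have [d [Hd Hdom]] := dom HA2 Hm Hne HKe.
have Hde : exponent Rt m d.
  move: Hd => /List.in_map_iff [p [<- Hp]]. by have [] := H12 p Hp.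
have Hcmp : forall p, List.In p (l1 ++ l2) -> cmpf (fun N => monomial Rt p.2 N) (fun N => monomial Rt d N).
  move=> p Hp. apply: Hdom. apply: List.in_map; exact: Hp.
have [L1 [C1 [L10 L1p]]] := plim Hde H1 (fun p Hp => Hcmp p (List.in_or_app _ _ _ (or_introl Hp))).
have [L2 [C2 [L20 L2p]]] := plim Hde H2 (fun p Hp => Hcmp p (List.in_or_app _ _ _ (or_intror Hp))).
have Hor : 0 < L1 \/ 0 < L2.
  move: Hd. rewrite map_cat => /List.in_app_iff [Hd|Hd]; [left; exact: L1p|right; exact: L2p].
have md N : monomial Rt d N <> 0 by apply: Rgt_not_eq; mp.
case: (classic (0 < L2)) => HL2.
- exists (atan (L1 * / L2)). apply: cv_atan.
  apply: cv_ext (CV_mult _ _ _ _ C1 (cv_inv C2 (Rgt_not_eq _ _ HL2))) => N.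
  field; repeat split; apply: Rgt_not_eq; first [apply P1|apply P2|mp].
- have HL1 : 0 < L1 by case: Hor.
  exists (PI/2 - atan (L2 * / L1)).
  apply: cv_ext (CV_minus _ _ _ _ (cv_const (PI/2)) (cv_atan (CV_mult _ _ _ _ C2 (cv_inv C1 (Rgt_not_eq _ _ HL1))))) => N.
  have -> : lsum Rt l2 N / monomial Rt d N * / (lsum Rt l1 N / monomial Rt d N) = / (lsum Rt l1 N / lsum Rt l2 N).
    field; repeat split; apply: Rgt_not_eq; first [apply P1|apply P2|mp].
  rewrite atan_inv; first ring. apply: Rdiv_lt_0_compat; [exact: P1|exact: P2].
Qed.

Definition inQ {E : finType} (Rt : nat -> E -> E -> R) d (f : nat -> R) :=
  exists e l1 l2, plist Rt (d + e) l1 /\ plist Rt e l2 /\ (forall N, 0 < lsum Rt l2 N) /\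
    forall N, f N = lsum Rt l1 N / lsum Rt l2 N.

Lemma plist1 (E : finType) (Rt : nat -> E -> E -> R) m k : exponent Rt m k -> plist Rt m [:: (1, k)].
Proof. move=> H p /= [<-|[]] /=; split; [lra|exact H]. Qed.

Arguments plist1 {E Rt m k}.
Arguments lsum_ge0 {E Rt m l} N _.
Arguments lsum_pos {E Rt m p l} N _.
Lemma lsum1 (E : finType) (Rt : nat -> E -> E -> R) k N : lsum Rt [:: (1, k)] N = monomial Rt k N.
Proof. rewrite /lsum /=. ring. Qed.

Lemma inQ_ext (E : finType) (Rt : nat -> E -> E -> R) d f g :
  (forall N, f N = g N) -> inQ Rt d f -> inQ Rt d g.
Proof. move=> H [e [l1 [l2 [A [B [C D]]]]]]. exists e, l1, l2; do 3 split => //. move=> N; rewrite -H; exact: D. Qed.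

Lemma inQ_ge0 (E : finType) (Rt : nat -> E -> E -> R) d f N : inQ Rt d f -> 0 <= f N.
Proof.
move=> [e [l1 [l2 [A [B [C D]]]]]]. rewrite D. apply: Rmult_le_pos; first exact: lsum_ge0 N A.
apply: Rlt_le; apply: Rinv_0_lt_compat; exact: C.
Qed.

Lemma inQ_dich (E : finType) (Rt : nat -> E -> E -> R) d f :
  inQ Rt d f -> (forall N, f N = 0) \/ (forall N, 0 < f N).
Proof.
move=> [e [l1 [l2 [A [B [C D]]]]]]. case: l1 A D => [|p l1] A D.
- left => N. rewrite D /lsum /=. field. apply: Rgt_not_eq; exact: C.
- right => N. rewrite D. apply: Rdiv_lt_0_compat; [exact: lsum_pos N A|exact: C].
Qed.

Lemma inQ_zero (E : finType) (Rt : nat -> E -> E -> R) d : inQ Rt d (fun _ => 0).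
Proof.
exists 0%nat, [::], [:: (1, @zk E)]; split; first by move=> p [].
split; first exact: plist1 (exponent_zk _ Rt).
split => N; rewrite lsum1 mono_zk; [lra|]. rewrite /lsum /=. field.
Qed.

Lemma inQ_one (E : finType) (Rt : nat -> E -> E -> R) : inQ Rt 0 (fun _ => 1).
Proof.
exists 0%nat, [:: (1, @zk E)], [:: (1, @zk E)]; split; first exact: plist1 (exponent_zk _ Rt).
split; first exact: plist1 (exponent_zk _ Rt).
split => N; rewrite !lsum1 !mono_zk; [lra|field].
Qed.

Lemma plist_cast (E : finType) (Rt : nat -> E -> E -> R) m m' l : m = m' -> plist Rt m l -> plist Rt m' l.
Proof. by move=> ->. Qed.

Lemma inQ_add (E : finType) (Rt : nat -> E -> E -> R) d f g :
  inQ Rt d f -> inQ Rt d g -> inQ Rt d (fun N => f N + g N).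
Proof.
move=> [e1 [a [b [A [B [C D]]]]]] [e2 [c [e [A' [B' [C' D']]]]]].
exists (e1 + e2)%nat, (lmul a e ++ lmul c b), (lmul b e); split.
  apply: plist_app; apply: plist_cast (plist_mul _ _); try eassumption; lia.
split; first exact: plist_mul.
split => N; rewrite !lsum_mul.
  apply: Rmult_lt_0_compat; [exact: C|exact: C'].
rewrite lsum_app !lsum_mul D D'. field.
split; apply: Rgt_not_eq; [exact: C'|exact: C].
Qed.

Lemma inQ_mul (E : finType) (Rt : nat -> E -> E -> R) d1 d2 f g :
  inQ Rt d1 f -> inQ Rt d2 g -> inQ Rt (d1 + d2) (fun N => f N * g N).
Proof.
move=> [e1 [a [b [A [B [C D]]]]]] [e2 [c [e [A' [B' [C' D']]]]]].
exists (e1 + e2)%nat, (lmul a c), (lmul b e); split.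
  apply: plist_cast (plist_mul A A'); lia.
split; first exact: plist_mul.
split => N; rewrite !lsum_mul.
  apply: Rmult_lt_0_compat; [exact: C|exact: C'].
rewrite D D'. field.
split; apply: Rgt_not_eq; [exact: C'|exact: C].
Qed.

Lemma inQ_div (E : finType) (Rt : nat -> E -> E -> R) d d2 f g :
  inQ Rt (d + d2) f -> inQ Rt d2 g -> (forall N, 0 < g N) -> inQ Rt d (fun N => f N / g N).
Proof.
move=> [e1 [a [b [A [B [C D]]]]]] [e2 [c [e [A' [B' [C' D']]]]]] Hg.
have Hc N : 0 < lsum Rt c N.
  have := Hg N. rewrite D'. have := C' N. move=> H1 H2.
  have -> : lsum Rt c N = lsum Rt c N / lsum Rt e N * lsum Rt e N by field; apply: Rgt_not_eq.
  exact: Rmult_lt_0_compat.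
exists (e1 + d2 + e2)%nat, (lmul a e), (lmul b c); split.
  apply: plist_cast (plist_mul A B'); lia.
split; first by apply: plist_cast (plist_mul B A'); lia.
split => N; rewrite !lsum_mul.
  apply: Rmult_lt_0_compat; [exact: C|exact: Hc].
rewrite D D'. field.
repeat split; apply: Rgt_not_eq; first [apply C|apply C'|apply Hc].
Qed.

Lemma inQ_ratio (E : finType) (Rt : nat -> E -> E -> R) (HA2 : assumptionA2 Rt) d f g :
  (1 <= d)%nat -> inQ Rt d f -> inQ Rt d g -> (forall N, 0 < f N) -> (forall N, 0 < g N) ->
  exists l, Un_cv (fun N => atan (f N / g N)) l.
Proof.
move=> Hd [e1 [a [b [A [B [C D]]]]]] [e2 [c [e [A' [B' [C' D']]]]]] Hf Hg.
have Hpos (x y : seq (R * (E -> E -> nat))) h : (forall N, 0 < h N) -> (forall N, 0 < lsum Rt y N) ->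
   (forall N, h N = lsum Rt x N / lsum Rt y N) -> forall N, 0 < lsum Rt x N.
  move=> Hh Hy Hxy N. have := Hh N. rewrite Hxy. have := Hy N. move=> H1 H2.
  have -> : lsum Rt x N = lsum Rt x N / lsum Rt y N * lsum Rt y N by field; apply: Rgt_not_eq.
  exact: Rmult_lt_0_compat.
have Ha := Hpos _ _ _ Hf C D. have Hc := Hpos _ _ _ Hg C' D'.
have [l Hl] := @poly_ratio _ _ HA2 (d + e1 + e2)%nat (lmul a e) (lmul b c) ltac:(lia)
  ltac:(apply: plist_cast (plist_mul A B'); lia) ltac:(apply: plist_cast (plist_mul B A'); lia)
  ltac:(move=> N; rewrite lsum_mul; apply: Rmult_lt_0_compat; [exact: Ha|exact: C'])
  ltac:(move=> N; rewrite lsum_mul; apply: Rmult_lt_0_compat; [exact: C|exact: Hc]).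
exists l. apply: cv_ext Hl => N. rewrite !lsum_mul D D'. congr atan. field.
repeat split; apply: Rgt_not_eq; first [apply C|apply C'|apply Hc].
Qed.

Definition fadd (f g : nat -> R) := fun N => f N + g N.

Lemma big_fun (I : Type) (r : seq I) (P : pred I) (F : I -> nat -> R) N :
  (\big[fadd/(fun _ => 0)]_(i <- r | P i) F i) N = \big[Rplus/0]_(i <- r | P i) F i N.
Proof.
elim: r => [|i r IH]; first by rewrite !big_nil.
rewrite !big_cons. case: (P i) => //. by rewrite /fadd IH.
Qed.

Lemma inQ_sum (E : finType) (Rt : nat -> E -> E -> R) d (I : Type) (r : seq I) (P : pred I) (F : I -> nat -> R) :
  (forall i, P i -> inQ Rt d (F i)) -> inQ Rt d (fun N => \big[Rplus/0]_(i <- r | P i) F i N).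
Proof.
move=> H. apply: (@inQ_ext _ _ _ (\big[fadd/(fun _ => 0)]_(i <- r | P i) F i)).
  move=> N; exact: big_fun.
apply: big_ind => //.
- exact: inQ_zero.
- move=> x y; exact: inQ_add.
Qed.

Definition inv_on {E : finType} (S : {set E}) (r : E -> E -> R) (nu : E -> R) :=
  forall y, y \in S ->
    \big[Rplus/0]_(x | (x \in S) && (x != y)) (nu x * r x y) =
    nu y * \big[Rplus/0]_(w | (w \in S) && (w != y)) r y w.

Lemma predD1' (E : finType) (S : {set E}) z y x :
  ((x \in S) && (x != y)) && (x != z) = (x \in S :\ z) && (x != y).
Proof. by rewrite in_setD1; case: (x \in S); case: (x != y); case: (x != z). Qed.

Lemma red_step (E : finType) (S : {set E}) z (r : E -> E -> R) nu' lam :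
  z \in S -> lam = \big[Rplus/0]_(w | (w \in S) && (w != z)) r z w -> lam <> 0 ->
  inv_on (S :\ z) (fun x y => r x y + r x z * r z y / lam) nu' ->
  inv_on S r (fun x => if x == z then (\big[Rplus/0]_(x | (x \in S) && (x != z)) (nu' x * r x z)) / lam
                       else nu' x).
Proof.
move=> Hz Hlam Hl0 Hinv y Hy.
set A := \big[Rplus/0]_(x | (x \in S) && (x != z)) (nu' x * r x z).
have EA : \big[Rplus/0]_(x | (x \in S) && (x != z)) ((if x == z then A / lam else nu' x) * r x z) = A.
  apply: eq_bigr => x /andP[_ /negbTE ->] //.
case: (eqVneq y z) => [->|Hyz].
  rewrite EA ?eqxx -Hlam. field. exact: Hl0.
have Hy' : y \in S :\ z by rewrite in_setD1 Hyz Hy.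
have H' := Hinv y Hy'. rewrite /= in H'.
rewrite (bigD1 z) /=; last by rewrite Hz eq_sym Hyz.
rewrite eqxx.
rewrite (eq_bigl (fun x => (x \in S :\ z) && (x != y))); last by move=> x; rewrite predD1'.
rewrite (eq_bigr (fun x => nu' x * r x y)); last first.
  move=> x; rewrite in_setD1 => /andP[/andP[/negbTE -> _] _] //.
rewrite [X in _ = nu' y * X](bigD1 z) /=; last by rewrite Hz eq_sym Hyz.
rewrite [X in _ = _ * (_ + X)](eq_bigl (fun x => (x \in S :\ z) && (x != y))); last by move=> x; rewrite predD1'.
have EA2 : A = nu' y * r y z + \big[Rplus/0]_(x | (x \in S :\ z) && (x != y)) (nu' x * r x z).
  rewrite /A (bigD1 y) /=; last by rewrite Hy Hyz.
  congr (_ + _). apply: eq_bigl => x. by rewrite -predD1' andbC; case: (x \in S); case: (x != y); case: (x != z).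
have EL2 : lam = r z y + \big[Rplus/0]_(x | (x \in S :\ z) && (x != y)) r z x.
  rewrite Hlam (bigD1 y) /=; last by rewrite Hy Hyz.
  congr (_ + _). apply: eq_bigl => x. by rewrite -predD1' andbC; case: (x \in S); case: (x != y); case: (x != z).
pose B := \big[Rplus/0]_(x | (x \in S :\ z) && (x != y)) (nu' x * r x y).
pose C := \big[Rplus/0]_(x | (x \in S :\ z) && (x != y)) r y x.
pose A' := \big[Rplus/0]_(x | (x \in S :\ z) && (x != y)) (nu' x * r x z).
pose L' := \big[Rplus/0]_(x | (x \in S :\ z) && (x != y)) r z x.
have S1 : \big[Rplus/0]_(x | (x \in S :\ z) && (x != y)) (nu' x * (r x y + r x z * r z y / lam))
   = B + A' * (r z y / lam).
  rewrite /B /A' big_distrl -big_split. apply: eq_bigr => x _ /=. field. exact: Hl0.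
have S2 : \big[Rplus/0]_(w | (w \in S :\ z) && (w != y)) (r y w + r y z * r z w / lam)
   = C + L' * (r y z / lam).
  rewrite /C /L' big_distrl -big_split. apply: eq_bigr => x _ /=. field. exact: Hl0.
rewrite S1 S2 in H'. rewrite -/B -/C in H' *.
have HA' : A' = A - nu' y * r y z by rewrite EA2 /A'; ring.
have HL' : L' = lam - r z y by rewrite EL2 /L'; ring.
rewrite HA' HL' in H'.
have -> : B = nu' y * C + nu' y * r y z - r z y * A / lam.
  apply: (Rplus_eq_reg_r ((A - nu' y * r y z) * (r z y / lam))). rewrite H'. field. exact: Hl0.
field. exact: Hl0.
Qed.

Arguments inQ_ext {E Rt d f g}.
Arguments inQ_ge0 {E Rt d f} N.
Arguments inQ_dich {E Rt d f}.
Arguments inQ_zero {E Rt d}.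
Arguments inQ_one {E Rt}.
Arguments inQ_add {E Rt d f g}.
Arguments inQ_mul {E Rt d1 d2 f g}.
Arguments inQ_div {E Rt d d2 f g}.
Arguments inQ_sum {E Rt d I r P F}.
Arguments inQ_ratio {E Rt} HA2 {d f g}.

Lemma le_sum_term (I : finType) (P : pred I) (F : I -> R) j :
  (forall i, P i -> 0 <= F i) -> P j -> F j <= \big[Rplus/0]_(i | P i) F i.
Proof.
move=> H Hj. rewrite (bigD1 j) //=.
have : 0 <= \big[Rplus/0]_(i | P i && (i != j)) F i.
  apply: big_ind => //; [lra|move=> a b; lra|move=> i /andP[Hi _]; exact: H].
lra.
Qed.

Lemma red_ind (E : finType) (Rt : nat -> E -> E -> R) n :
  forall (S : {set E}), #|S| = n.+1 -> forall r : E -> E -> nat -> R,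
  (forall x y, x \in S -> y \in S -> x != y -> inQ Rt 1 (r x y)) ->
  exists nu : E -> nat -> R, (forall x, x \in S -> inQ Rt 0 (nu x)) /\
    (exists x, x \in S /\ forall N, 0 < nu x N) /\
    forall N, inv_on S (fun x y => r x y N) (fun x => nu x N).
Proof.
elim: n => [|n IH] S HS r Hr.
  have /cards1P [z Sz] : #|S| == 1%nat by rewrite HS.
  exists (fun _ _ => 1); split; first by move=> x _; exact: inQ_one.
  split; first by exists z; split; [rewrite Sz set11|move=> N; lra].
  move=> N y Hy. rewrite Sz in_set1 in Hy. rewrite Sz !big1 //; first ring.
  - move=> x /andP[]. rewrite !in_set1 => /eqP -> . by rewrite eq_sym Hy.
  - move=> x /andP[]. rewrite !in_set1 => /eqP -> . by rewrite eq_sym Hy.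
have [z Hz] : exists z, z \in S by apply/set0Pn; rewrite -card_gt0 HS.
have HS' : #|S :\ z| = n.+1.
  move: HS. rewrite (cardsD1 z S) Hz. by case.
pose lam := fun N => \big[Rplus/0]_(w | (w \in S) && (w != z)) r z w N.
have Hlam : inQ Rt 1 lam.
  apply: inQ_sum => w /andP[Hw Hwz]. apply: Hr => //. by rewrite eq_sym.
have Hr0 x y N : x \in S -> y \in S -> x != y -> 0 <= r x y N.
  move=> Hx Hy Hxy. exact: inQ_ge0 N (Hr x y Hx Hy Hxy).
case: (inQ_dich Hlam) => Hl.
- exists (fun x _ => if x == z then 1 else 0); split.
    move=> x _; case: (x == z); [exact: inQ_one|exact: inQ_zero].
  split; first by exists z; split => // N; rewrite eqxx; lra.
  move=> N y Hy /=.
  have Hzy w : w \in S -> w != z -> r z w N = 0.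
    move=> Hw Hwz. have := Hl N. rewrite /lam => HH.
    have := @le_sum_term E (fun w => (w \in S) && (w != z)) (fun w => r z w N) w.
    rewrite HH. move=> H1. have := H1 ltac:(move=> i /andP[Hi Hiz]; apply: Hr0 => //; by rewrite eq_sym) ltac:(by rewrite Hw Hwz).
    have := Hr0 z w N Hz Hw ltac:(by rewrite eq_sym). lra.
  case: (eqVneq y z) => [->|Hyz].
    rewrite ?eqxx big1; first by have := Hl N; rewrite /lam => ->; ring.
    move=> x /andP[_ /negbTE ->]; ring.
  rewrite ?(negbTE Hyz) (bigD1 z) /=; last by rewrite Hz eq_sym Hyz.
  rewrite ?eqxx big1; first by rewrite Hzy //; ring.
  move=> x /andP[_ /negbTE ->]; ring.
have Hlam0 N : lam N <> 0 by apply: Rgt_not_eq; exact: Hl.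
pose r' := fun x y N => r x y N + r x z N * r z y N / lam N.
have Hr' : forall x y, x \in S :\ z -> y \in S :\ z -> x != y -> inQ Rt 1 (r' x y).
  move=> x y; rewrite !in_setD1 => /andP[Hxz Hx] /andP[Hyz Hy] Hxy.
  apply: inQ_add; first exact: Hr.
  apply: (inQ_div (d2 := 1%nat)) => //. apply: (inQ_mul (d1 := 1%nat) (d2 := 1%nat)); apply: Hr => //.
  by rewrite eq_sym.
have [nu' [HQ [[x0 [Hx0 Hpos0]] Hinv']]] := IH (S :\ z) HS' r' Hr'.
exists (fun x N => if x == z then (\big[Rplus/0]_(x | (x \in S) && (x != z)) (nu' x N * r x z N)) / lam N
                   else nu' x N); split.
  move=> x Hx. case: (eqVneq x z) => [_|Hxz].
    apply: (inQ_div (d := 0%nat) (d2 := 1%nat)) => //.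
    apply: inQ_sum => w /andP[Hw Hwz]. apply: (inQ_mul (d1 := 0%nat) (d2 := 1%nat)).
      apply: HQ. by rewrite in_setD1 Hwz Hw.
    exact: Hr.
  apply: inQ_ext (HQ x _) => //. by rewrite in_setD1 Hxz Hx.
split.
  exists x0. move: Hx0; rewrite in_setD1 => /andP[Hx0z Hx0]. split => //.
  move=> N. rewrite (negbTE Hx0z). exact: Hpos0.
move=> N. apply: (@red_step _ _ _ _ _ (lam N)) => //. exact: Hinv'.
Qed.

Lemma pos_inv (E : finType) (r : E -> E -> R) (m : E -> R) :
  rates r -> irreducible r -> invariant_prob r m -> forall x, 0 < m x.
Proof.
move=> Hr Hirr [Hm0 [Hs Hinv]] x.
case: (Rle_lt_dec (m x) 0) => // Hx.
have Hx0 : m x = 0 by have := Hm0 x; lra.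
have key : forall a b, clos_refl_trans E (fun a b => a <> b /\ 0 < r a b) a b -> m b = 0 -> m a = 0.
  move=> a b H; induction H as [a b [Hab Hr0]| a | a b c _ IH1 _ IH2].
  - move=> Hb. have := Hinv b. rewrite Hb Rmult_0_l => Hsum.
    have := @le_sum_term E (fun x => x != b) (fun x => m x * r x b) a.
    rewrite Hsum. move=> H1. have := H1 ltac:(move=> i /eqP Hi; apply: Rmult_le_pos; [exact: Hm0|exact: Hr]) ltac:(by apply/eqP).
    have := Hm0 a. nra.
  - done.
  - move=> Hc. apply: IH1. exact: IH2.
have : \big[Rplus/0]_(y : E) m y = 0.
  rewrite big1 // => y _. exact: key (Hirr y x) Hx0.
lra.
Qed.

Definition kxy {E : finType} (x y : E) : E -> E -> nat :=
  fun a b => if (a == x) && (b == y) then 1%nat else 0%nat.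

Lemma kxy_other (E : finType) (x y : E) (p : E * E) : p != (x, y) -> kxy x y p.1 p.2 = 0%nat.
Proof.
case: p => a b /= H. rewrite /kxy. case: (eqVneq a x) => [Ha|] //=. case: (eqVneq b y) => [Hb|] //=.
by rewrite Ha Hb eqxx in H.
Qed.

Lemma bond_inQ (E : finType) (Rt : nat -> E -> E -> R) x y :
  bond Rt x y -> inQ Rt 1 (fun N => Rt N x y).
Proof.
move=> Hb. have Hxy : x != y by apply/eqP; case: Hb.
have Hexp : exponent Rt 1 (kxy x y).
  split.
    move=> a b. rewrite /kxy. case: (eqVneq a x) => [->|] //=. case: (eqVneq b y) => [->|] //=.
  rewrite (bigD1 (x, y)) //= big1 /=; first by rewrite /kxy !eqxx.
  move=> p /andP[_ Hp]. exact: kxy_other.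
exists 0%nat, [:: (1, kxy x y)], [:: (1, @zk E)]; split; first exact: plist1 Hexp.
split; first exact: plist1 (exponent_zk _ Rt).
split => N; rewrite !lsum1 mono_zk; first lra.
rewrite /monomial (bigD1 (x, y)) //= big1 /=.
  rewrite /kxy !eqxx /=. field.
move=> p /andP[_ Hp]. by rewrite kxy_other.
Qed.

Arguments pos_inv {E r m}.
Arguments bond_inQ {E Rt x y}.

Theorem corollary3p5 (E : finType) (Rt : nat -> E -> E -> R) (mu : nat -> E -> R)
  (Hrates : forall N, rates (Rt N))
  (Hirr : forall N, irreducible (Rt N))
  (Hinv : forall N, invariant_prob (Rt N) (mu N))
  (Huniq : forall N (nu : E -> R), invariant_prob (Rt N) nu -> nu = mu N)
  (HA1 : assumptionA1 Rt) (HA2 : assumptionA2 Rt) :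
  ordered_family (sym_bond Rt) (cs Rt mu).
Proof.
have Hmupos N x : 0 < mu N x := pos_inv (Hrates N) (Hirr N) (Hinv N) x.
have HrQ x y : x != y -> inQ Rt 1 (fun N => Rt N x y).
  move=> /eqP Hxy. case: (HA1 x y Hxy) => H.
    apply: inQ_ext inQ_zero => N. by rewrite H.
  exact: bond_inQ.
have [x1 _] : exists x : E, True.
  apply: NNPP => Hn. have := proj1 (proj2 (Hinv 0%nat)). rewrite big1; first lra.
  move=> x _. exfalso; apply: Hn; by exists x.
have : (0 < #|[set: E]|)%nat by apply/card_gt0P; exists x1; rewrite in_setT.
case HS: #|[set: E]| => [//|n] _.
have [nu [HQ [[x0 [_ Hpos0]] Hnu]]] := @red_ind E Rt n [set: E] HS (fun x y N => Rt N x y)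
  (fun x y _ _ Hxy => HrQ x y Hxy).
have Hnu0 x N : 0 <= nu x N by exact: inQ_ge0 N (HQ x (in_setT x)).
pose s N := \big[Rplus/0]_(x : E) nu x N.
have Hs N : 0 < s N.
  have := @le_sum_term E (fun _ => true) (fun x => nu x N) x0 (fun i _ => Hnu0 i N) erefl.
  have := Hpos0 N. rewrite /s. lra.
have Hs0 N : s N <> 0 by apply: Rgt_not_eq; exact: Hs.
have Hmu N : mu N = fun x => nu x N / s N.
  symmetry. apply: Huniq. split; last split.
  - move=> x. apply: Rmult_le_pos; first exact: Hnu0. apply: Rlt_le; apply: Rinv_0_lt_compat; exact: Hs.
  - rewrite -big_distrl /= -/(s N). field. exact: Hs0.
  - move=> y. have := Hnu N y (in_setT y). rewrite /=.
    rewrite (eq_bigl (fun x => x != y)); last by move=> x; rewrite in_setT.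
    rewrite [X in _ = _ * X -> _](eq_bigl (fun x => x != y)); last by move=> x; rewrite in_setT.
    move=> H.
    rewrite (eq_bigr (fun x => (nu x N * Rt N x y) * / s N)); last by move=> x _; rewrite /Rdiv; ring.
    rewrite -big_distrl /= H. set T := \big[Rplus/0]_(z | z != y) Rt N y z. rewrite /Rdiv. ring.
pose g (p : E * E) N := nu p.1 N * Rt N p.1 p.2 + nu p.2 N * Rt N p.2 p.1.
have Hcs p N : cs Rt mu p N = g p N / (2 * s N).
  rewrite /cs /g (Hmu N). field. exact: Hs0.
have Hcspos p N : sym_bond Rt p -> 0 < cs Rt mu p N.
  case=> Hne Hb. rewrite /cs.
  have H1 := Hmupos N p.1. have H2 := Hmupos N p.2.
  have R1 := Hrates N p.1 p.2 Hne. have R2 := Hrates N p.2 p.1 (nesym Hne).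
  case: Hb => [[_ Hb]|[_ Hb]]; have := Hb N; nra.
have Hgpos p N : sym_bond Rt p -> 0 < g p N.
  move=> Hp. have := Hcspos p N Hp. rewrite Hcs. have := Hs N. move=> A B.
  have -> : g p N = g p N / (2 * s N) * (2 * s N) by field; exact: Hs0.
  apply: Rmult_lt_0_compat => //. lra.
have HgQ p : sym_bond Rt p -> inQ Rt 1 (g p).
  case=> Hne _. have Hne' : p.1 != p.2 by apply/eqP.
  apply: inQ_add; apply: (inQ_mul (d1 := 0%nat) (d2 := 1%nat)).
  - exact: HQ (in_setT _).
  - exact: HrQ.
  - exact: HQ (in_setT _).
  - apply: HrQ. by rewrite eq_sym.
split; first by move=> p Hp N; exact: Hcspos.
move=> p q Hp Hq _.
have [l Hl] := inQ_ratio HA2 (d := 1%nat) erefl (HgQ p Hp) (HgQ q Hq) (fun N => Hgpos p N Hp) (fun N => Hgpos q N Hq).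
exists l. apply: cv_ext Hl => N. rewrite !Hcs. congr atan. field.
split; [exact: Hs0|]. apply: Rgt_not_eq; exact: Hgpos.
Qed.
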